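(* Let $f$ be a real ternary cubic form ($r=3$) and let $g$ be the AMWP metric of $f$ on $\mathbb{R}^3+iW$. Write $f_{ikp}=\partial^3 f/\partial y_i\partial y_k\partial y_p$ (constants). Let $(g^{p\bar q})$ be the inverse matrix of $(g_{i\bar j})$. Then at every point of $\mathbb{R}^3+iW$ and for all $i,j,k,l\in\{1,2,3\}$, $$R_{i\bar jk\bar l}=g_{i\bar j}g_{k\bar l}+g_{i\bar l}g_{k\bar j}-\sum_{p,q}\frac{g^{p\bar q}f_{ikp}f_{jlq}}{64\,f(y)^2}.$$
   Context: Let $f(y_1,\dots,y_r)$ be a real cubic form on $\mathbb{R}^r$. Its index cone $W$ is the open cone of $y$ with $f(y)>0$ at which the Hessian $(\partial^2f/\partial y_i\partial y_j)(y)$ has signature $(1,r-1)$. On $\mathbb{R}^r+iW\subset\mathbb{C}^r$, with coordinates $t_j=x_j+iy_j$, the AMWP metric of $f$ is the Kähler metric with potential $K_0=-\log f(y)$. Thus $g_{i\bar j}=\partial^2K_0/\partial t_i\partial\bar t_j=-\tfrac14\partial^2\log f/\partial y_i\partial y_j$. Its curvature tensor is $$R_{i\bar jk\bar l}=\frac{\partial^2 g_{i\bar j}}{\partial t_k\partial\bar t_l}-\sum_{d,e}g^{\bar e d}\frac{\partial g_{i\bar e}}{\partial t_k}\frac{\partial g_{\bar j d}}{\partial\bar t_l},$$ where $(g^{\bar e d})$ is the inverse of $(g_{i\bar j})$. *)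

(* Defs.v *)
From Stdlib Require Import Reals ClassicalEpsilon.
Open Scope R_scope.

(* Points of R^3 are represented as functions nat -> R (only indices 0,1,2 matter). *)
Definition vec := nat -> R.

Definition upd (y : vec) (i : nat) (s : R) : vec :=
  fun j => if Nat.eqb j i then y j + s else y j.

(* Partial derivative d F / d y_i at y (the unique limit, when it exists). *)
Definition pd (F : vec -> R) (i : nat) (y : vec) : R :=
  epsilon (inhabits 0) (fun l => derivable_pt_lim (fun s => F (upd y i s)) 0 l).

Definition sum3 (F : nat -> R) : R := F 0%nat + F 1%nat + F 2%nat.

(* Complex numbers as pairs (Re, Im). *)
Definition Cx := (R * R)%type.
Definition RtoC (a : R) : Cx := (a, 0).
Definition Cadd (z w : Cx) : Cx := (fst z + fst w, snd z + snd w).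
Definition Csub (z w : Cx) : Cx := (fst z - fst w, snd z - snd w).
Definition Cmul (z w : Cx) : Cx :=
  (fst z * fst w - snd z * snd w, fst z * snd w + snd z * fst w).
Definition Csum3 (F : nat -> Cx) : Cx := Cadd (Cadd (F 0%nat) (F 1%nat)) (F 2%nat).
Definition Cdelta (i j : nat) : Cx := if Nat.eqb i j then (1, 0) else (0, 0).

(* Functions on C^3 = R^3 + i R^3, point t = x + i y, complex valued. *)
Definition cfun := vec -> vec -> Cx.

Definition pdx (F : cfun) (k : nat) (x y : vec) : Cx :=
  (pd (fun x' => fst (F x' y)) k x, pd (fun x' => snd (F x' y)) k x).
Definition pdy (F : cfun) (k : nat) (x y : vec) : Cx :=
  (pd (fun y' => fst (F x y')) k y, pd (fun y' => snd (F x y')) k y).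

(* Wirtinger derivatives: d/dt_k = 1/2 (d/dx_k - i d/dy_k),
   d/d(conj t_k) = 1/2 (d/dx_k + i d/dy_k). *)
Definition dt (F : cfun) (k : nat) : cfun := fun x y =>
  let a := pdx F k x y in let b := pdy F k x y in
  ((fst a + snd b) / 2, (snd a - fst b) / 2).
Definition dtb (F : cfun) (k : nat) : cfun := fun x y =>
  let a := pdx F k x y in let b := pdy F k x y in
  ((fst a - snd b) / 2, (snd a + fst b) / 2).

Definition cubic (c : nat -> nat -> nat -> R) (y : vec) : R :=
  sum3 (fun a => sum3 (fun b => sum3 (fun d => c a b d * y a * y b * y d))).

Definition hess (f : vec -> R) (y : vec) (a b : nat) : R :=
  pd (fun z => pd f b z) a y.

Definition det3 (P : nat -> nat -> R) : R :=
  P 0%nat 0%nat * (P 1%nat 1%nat * P 2%nat 2%nat - P 1%nat 2%nat * P 2%nat 1%nat)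
  - P 0%nat 1%nat * (P 1%nat 0%nat * P 2%nat 2%nat - P 1%nat 2%nat * P 2%nat 0%nat)
  + P 0%nat 2%nat * (P 1%nat 0%nat * P 2%nat 1%nat - P 1%nat 1%nat * P 2%nat 0%nat).

Definition diag_1_m1_m1 (a b : nat) : R :=
  if Nat.eqb a b then (if Nat.eqb a 0 then 1 else -1) else 0.

(* Symmetric real 3x3 matrix M has signature (1,2): it is congruent
   (Sylvester) to diag(1,-1,-1). *)
Definition signature_1_2 (M : nat -> nat -> R) : Prop :=
  exists P : nat -> nat -> R, det3 P <> 0 /\
    forall a b, (a < 3)%nat -> (b < 3)%nat ->
      sum3 (fun m => sum3 (fun n => P m a * M m n * P n b)) = diag_1_m1_m1 a b.

Definition in_index_cone (f : vec -> R) (y : vec) : Prop :=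
  f y > 0 /\ signature_1_2 (hess f y).

Definition K0 (f : vec -> R) : cfun := fun x y => RtoC (- ln (f y)).
Definition gmet (f : vec -> R) (i j : nat) : cfun := dt (dtb (K0 f) j) i.

(* Curvature R_{i jbar k lbar} at (x,y), where Hinv e d = g^{ebar d}
   is the inverse matrix of (g_{i jbar}). *)
Definition curv (f : vec -> R) (Hinv : nat -> nat -> Cx) (i j k l : nat) (x y : vec) : Cx :=
  Csub (dt (dtb (gmet f i j) l) k x y)
       (Csum3 (fun d => Csum3 (fun e =>
          Cmul (Hinv e d) (Cmul (dt (gmet f i e) k x y) (dtb (gmet f d j) l x y))))).

Definition f3 (f : vec -> R) (i k p : nat) (y : vec) : R :=
  pd (fun z => pd (fun w => pd f p w) k z) i y.

(* Main.v *)
Require Import Defs.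
From Stdlib Require Import Reals Lra Lia ClassicalEpsilon FunctionalExtensionality.
Open Scope R_scope.


Lemma d_eq f x l l' : derivable_pt_lim f x l' -> l' = l -> derivable_pt_lim f x l.
Proof. intros H ->; exact H. Qed.
Lemma d_const (a x : R) : derivable_pt_lim (fun _ => a) x 0.
Proof. exact (derivable_pt_lim_const a x). Qed.
Lemma d_id x : derivable_pt_lim (fun s => s) x 1.
Proof. exact (derivable_pt_lim_id x). Qed.
Lemma d_plus f g x l1 l2 : derivable_pt_lim f x l1 -> derivable_pt_lim g x l2 ->
  derivable_pt_lim (fun s => f s + g s) x (l1 + l2).
Proof. intros; exact (derivable_pt_lim_plus f g x l1 l2 H H0). Qed.
Lemma d_minus f g x l1 l2 : derivable_pt_lim f x l1 -> derivable_pt_lim g x l2 ->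
  derivable_pt_lim (fun s => f s - g s) x (l1 - l2).
Proof. intros; exact (derivable_pt_lim_minus f g x l1 l2 H H0). Qed.
Lemma d_mult f g x l1 l2 : derivable_pt_lim f x l1 -> derivable_pt_lim g x l2 ->
  derivable_pt_lim (fun s => f s * g s) x (l1 * g x + f x * l2).
Proof. intros; exact (derivable_pt_lim_mult f g x l1 l2 H H0). Qed.

Ltac dpoly := first
  [ apply d_const
  | apply d_id
  | apply d_plus; dpoly
  | apply d_minus; dpoly
  | apply d_mult; dpoly ].



Definition S3 (c : nat -> nat -> nat -> R) (a b d : nat) : R :=
  c a b d + c a d b + c b a d + c b d a + c d a b + c d b a.
Definition F2 c a b (w : vec) : R := sum3 (fun d => S3 c a b d * w d).
Definition F1 c a (w : vec) : R := sum3 (fun b => sum3 (fun d => S3 c a b d * w b * w d)) / 2.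

Ltac dfin := cbv beta; unfold F1, F2, S3, sum3; field.

Lemma dF c a z : (a < 3)%nat ->
  derivable_pt_lim (fun s => cubic c (upd z a s)) 0 (F1 c a z).
Proof.
  intros Ha; destruct a as [|[|[|]]]; try lia; eapply d_eq;
  (unfold cubic, sum3, upd; simpl; dpoly) || dfin.
Qed.

Lemma dF1 c a b z : (a < 3)%nat ->
  derivable_pt_lim (fun s => F1 c b (upd z a s)) 0 (F2 c b a z).
Proof.
  intros Ha; destruct a as [|[|[|]]]; try lia; eapply d_eq;
  (unfold F1, sum3, upd; simpl; unfold Rdiv; dpoly) || dfin.
Qed.

Lemma dF2 c a b d z : (a < 3)%nat ->
  derivable_pt_lim (fun s => F2 c b d (upd z a s)) 0 (S3 c b d a).
Proof.
  intros Ha; destruct a as [|[|[|]]]; try lia; eapply d_eq;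
  (unfold F2, sum3, upd; simpl; dpoly) || dfin.
Qed.


Definition hasd c (G : vec -> R) a (D : vec -> R) :=
  forall z, 0 < cubic c z -> derivable_pt_lim (fun s => G (upd z a s)) 0 (D z).

Lemma upd0 z a : upd z a 0 = z.
Proof. apply functional_extensionality; intro j; unfold upd; destruct (Nat.eqb j a); ring. Qed.

Lemma hasd_ext c G a D D' : (forall z, 0 < cubic c z -> D z = D' z) -> hasd c G a D -> hasd c G a D'.
Proof. intros E H z Hz; rewrite <- E by exact Hz; apply H; exact Hz. Qed.

Lemma hasd_plus c G H a D1 D2 : hasd c G a D1 -> hasd c H a D2 ->
  hasd c (fun w => G w + H w) a (fun z => D1 z + D2 z).
Proof. intros H1 H2 z Hz; apply d_plus; auto. Qed.
Lemma hasd_minus c G H a D1 D2 : hasd c G a D1 -> hasd c H a D2 ->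
  hasd c (fun w => G w - H w) a (fun z => D1 z - D2 z).
Proof. intros H1 H2 z Hz; apply d_minus; auto. Qed.
Lemma hasd_mult c G H a D1 D2 : hasd c G a D1 -> hasd c H a D2 ->
  hasd c (fun w => G w * H w) a (fun z => D1 z * H z + G z * D2 z).
Proof.
  intros H1 H2 z Hz. pose proof (d_mult _ _ 0 _ _ (H1 z Hz) (H2 z Hz)) as K.
  cbv beta in K; rewrite upd0 in K; exact K.
Qed.
Lemma hasd_const c k a : hasd c (fun _ => k) a (fun _ => 0).
Proof. intros z Hz; apply d_const. Qed.
Lemma hasd_opp c G a D : hasd c G a D -> hasd c (fun w => - G w) a (fun z => - D z).
Proof. intros H z Hz; exact (derivable_pt_lim_opp _ _ _ (H z Hz)). Qed.

Lemma hasd_inv c G a D : (forall z, 0 < cubic c z -> G z <> 0) -> hasd c G a D ->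
  hasd c (fun w => / G w) a (fun z => - D z / (G z * G z)).
Proof.
  intros NZ H z Hz.
  assert (K := derivable_pt_lim_div (fun _ => 1) (fun s => G (upd z a s)) 0 0 (D z)
     (d_const 1 0) (H z Hz)).
  unfold div_fct in K; cbv beta in K; rewrite upd0 in K.
  specialize (K (NZ z Hz)).
  eapply derivable_pt_lim_ext; [| eapply d_eq; [exact K|]].
  - intro s; cbv beta; unfold Rdiv; ring.
  - unfold Rsqr; field; apply NZ; exact Hz.
Qed.

Lemma hasd_ln c G a D : (forall z, 0 < cubic c z -> 0 < G z) -> hasd c G a D ->
  hasd c (fun w => ln (G w)) a (fun z => D z / G z).
Proof.
  intros P H z Hz.
  assert (K := derivable_pt_lim_comp (fun s => G (upd z a s)) ln 0 (D z) (/ G z) (H z Hz)).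
  cbv beta in K; rewrite upd0 in K.
  specialize (K (derivable_pt_lim_ln _ (P z Hz))).
  eapply derivable_pt_lim_ext; [| eapply d_eq; [exact K|]].
  - intro s; reflexivity.
  - unfold Rdiv; ring.
Qed.

Lemma pd_eq G a z l : derivable_pt_lim (fun s => G (upd z a s)) 0 l -> pd G a z = l.
Proof.
  intro H. unfold pd.
  pose proof (epsilon_spec (inhabits 0)
     (fun l => derivable_pt_lim (fun s => G (upd z a s)) 0 l) (ex_intro _ l H)) as K.
  exact (uniqueness_limite _ _ _ _ K H).
Qed.

Lemma local_pos c a z : (a < 3)%nat -> 0 < cubic c z ->
  exists d, 0 < d /\ forall s, Rabs s < d -> 0 < cubic c (upd z a s).
Proof.
  intros Ha Hz.
  assert (Dp : derivable_pt (fun s => cubic c (upd z a s)) 0) by (exists (F1 c a z); apply dF; exact Ha).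
  pose proof (derivable_continuous_pt _ _ Dp) as C.
  unfold continuity_pt, continue_in, limit1_in, limit_in in C; simpl in C.
  destruct (C (cubic c z) Hz) as [al [Hal Hl]].
  exists al; split; [exact Hal|]. intros s Hs.
  destruct (Req_dec s 0) as [->|Hs0]; [rewrite upd0; exact Hz|].
  specialize (Hl s). rewrite upd0 in Hl. unfold R_dist, D_x, no_cond in Hl.
  assert (Hd : Rabs (cubic c (upd z a s) - cubic c z) < cubic c z).
  { apply Hl. split; [split; [exact I | congruence] | rewrite Rminus_0_r; exact Hs]. }
  apply Rabs_def2 in Hd. lra.
Qed.

Lemma pd_local c G H a D z : (a < 3)%nat ->
  (forall w, 0 < cubic c w -> G w = H w) -> hasd c H a D -> 0 < cubic c z -> pd G a z = D z.
Proof.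
  intros Ha E HD Hz. apply pd_eq.
  destruct (local_pos c a z Ha Hz) as [d [Hd Hl]].
  apply (derivable_pt_lim_locally_ext (fun s => H (upd z a s)) _ 0 (-d) d).
  - lra.
  - intros s Hs. symmetry; apply E, Hl. apply Rabs_def1; lra.
  - apply HD; exact Hz.
Qed.

Lemma pd_constf G a z : (forall s, G (upd z a s) = G z) -> pd G a z = 0.
Proof.
  intro E. apply pd_eq. eapply derivable_pt_lim_ext; [| apply (d_const (G z))].
  intro s; cbv beta; rewrite E; reflexivity.
Qed.


Definition Pf c a (w : vec) := F1 c a w * / cubic c w.
Definition Qf c a b (w : vec) := F2 c a b w * / cubic c w.
Definition Rf c a b d (w : vec) := S3 c a b d * / cubic c w.
Definition Mf c a b (w : vec) := Qf c a b w - Pf c a w * Pf c b w.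

Definition L3x (P : nat -> R) (M : nat -> nat -> R) (Rr : nat -> nat -> nat -> R) i j k :=
  Rr i j k - M i j * P k - M i k * P j - M j k * P i - P i * P j * P k.
Definition L4x (P : nat -> R) (M : nat -> nat -> R) (Rr : nat -> nat -> nat -> R) i j k l :=
  - Rr i j k * P l - (L3x P M Rr i j l * P k + M i j * M k l)
  - (L3x P M Rr i k l * P j + M i k * M j l) - (L3x P M Rr j k l * P i + M j k * M i l)
  - (M i l * P j * P k + P i * M j l * P k + P i * P j * M k l).

Definition L3f c i j k (w : vec) :=
  L3x (fun a => Pf c a w) (fun a b => Mf c a b w) (fun a b d => Rf c a b d w) i j k.
Definition L4f c i j k l (w : vec) :=
  L4x (fun a => Pf c a w) (fun a b => Mf c a b w) (fun a b d => Rf c a b d w) i j k l.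

Lemma hasd_cubic c a : (a < 3)%nat -> hasd c (cubic c) a (F1 c a).
Proof. intros Ha z _; apply dF; exact Ha. Qed.
Lemma hasd_F1 c a b : (a < 3)%nat -> hasd c (F1 c b) a (F2 c b a).
Proof. intros Ha z _; apply dF1; exact Ha. Qed.
Lemma hasd_F2 c a b d : (a < 3)%nat -> hasd c (F2 c b d) a (fun _ => S3 c b d a).
Proof. intros Ha z _; apply dF2; exact Ha. Qed.
Lemma hasd_invF c a : (a < 3)%nat ->
  hasd c (fun w => / cubic c w) a (fun z => - F1 c a z / (cubic c z * cubic c z)).
Proof.
  intro Ha. apply hasd_inv; [intros z Hz; lra | apply hasd_cubic; exact Ha].
Qed.

Lemma hasd_P c i a : (a < 3)%nat -> hasd c (Pf c i) a (Mf c i a).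
Proof.
  intro Ha. eapply hasd_ext; [| apply (hasd_mult c (F1 c i) (fun w => / cubic c w));
    [apply hasd_F1 | apply hasd_invF]; exact Ha].
  intros z Hz; cbv beta; unfold Mf, Qf, Pf; field; lra.
Qed.
Lemma hasd_Q c i j a : (a < 3)%nat ->
  hasd c (Qf c i j) a (fun w => Rf c i j a w - Qf c i j w * Pf c a w).
Proof.
  intro Ha. eapply hasd_ext; [| apply (hasd_mult c (F2 c i j) (fun w => / cubic c w));
    [apply hasd_F2 | apply hasd_invF]; exact Ha].
  intros z Hz; cbv beta; unfold Rf, Qf, Pf; field; lra.
Qed.
Lemma hasd_R c i j k a : (a < 3)%nat ->
  hasd c (Rf c i j k) a (fun w => - Rf c i j k w * Pf c a w).
Proof.
  intro Ha. eapply hasd_ext; [| apply (hasd_mult c (fun _ => S3 c i j k) (fun w => / cubic c w));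
    [apply hasd_const | apply hasd_invF; exact Ha]].
  intros z Hz; cbv beta; unfold Rf, Pf; field; lra.
Qed.
Lemma hasd_M c i j a : (a < 3)%nat -> hasd c (Mf c i j) a (L3f c i j a).
Proof.
  intro Ha. eapply hasd_ext; [| apply (hasd_minus c (Qf c i j) (fun w => Pf c i w * Pf c j w));
    [apply hasd_Q; exact Ha | apply hasd_mult; apply hasd_P; exact Ha]].
  intros z Hz; cbv beta; unfold L3f, L3x, Mf; cbv beta; ring.
Qed.

Lemma hasd_L3 c i j k a : (a < 3)%nat -> hasd c (L3f c i j k) a (L4f c i j k a).
Proof.
  intro Ha. unfold L3f, L3x.
  eapply hasd_ext; [| repeat first [ apply hasd_R; exact Ha
     | apply hasd_M; exact Ha | apply hasd_P; exact Ha | apply hasd_minus | apply hasd_mult ] ].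
  intros z Hz; cbv beta; unfold L4f, L4x, L3f, L3x, Mf; cbv beta; ring.
Qed.


Definition yonly (F : cfun) := forall x x' y, F x y = F x' y.

Lemma dt_y F k x y : yonly F ->
  dt F k x y = (pd (fun y' => snd (F x y')) k y / 2, - pd (fun y' => fst (F x y')) k y / 2).
Proof.
  intro YF. unfold dt, pdx, pdy; cbn [fst snd].
  rewrite (pd_constf (fun x' => fst (F x' y)) k x) by (intro s; rewrite (YF (upd x k s) x y); reflexivity).
  rewrite (pd_constf (fun x' => snd (F x' y)) k x) by (intro s; rewrite (YF (upd x k s) x y); reflexivity).
  f_equal; field.
Qed.

Lemma dtb_y F k x y : yonly F ->
  dtb F k x y = (- pd (fun y' => snd (F x y')) k y / 2, pd (fun y' => fst (F x y')) k y / 2).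
Proof.
  intro YF. unfold dtb, pdx, pdy; cbn [fst snd].
  rewrite (pd_constf (fun x' => fst (F x' y)) k x) by (intro s; rewrite (YF (upd x k s) x y); reflexivity).
  rewrite (pd_constf (fun x' => snd (F x' y)) k x) by (intro s; rewrite (YF (upd x k s) x y); reflexivity).
  f_equal; field.
Qed.

Lemma yonly_dt F k : yonly F -> yonly (dt F k).
Proof.
  intros YF x x' y. rewrite !dt_y by exact YF.
  assert (E1 : (fun y' => snd (F x' y')) = (fun y' => snd (F x y')))
    by (apply functional_extensionality; intro; rewrite (YF x' x); reflexivity).
  assert (E2 : (fun y' => fst (F x' y')) = (fun y' => fst (F x y')))
    by (apply functional_extensionality; intro; rewrite (YF x' x); reflexivity).
  rewrite E1, E2; reflexivity.
Qed.
Lemma yonly_dtb F k : yonly F -> yonly (dtb F k).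
Proof.
  intros YF x x' y. rewrite !dtb_y by exact YF.
  assert (E1 : (fun y' => snd (F x' y')) = (fun y' => snd (F x y')))
    by (apply functional_extensionality; intro; rewrite (YF x' x); reflexivity).
  assert (E2 : (fun y' => fst (F x' y')) = (fun y' => fst (F x y')))
    by (apply functional_extensionality; intro; rewrite (YF x' x); reflexivity).
  rewrite E1, E2; reflexivity.
Qed.


Lemma yonly_K0 f : yonly (K0 f).
Proof. intros x x' y; reflexivity. Qed.
Lemma yonly_gmet f i j : yonly (gmet f i j).
Proof. unfold gmet; apply yonly_dt, yonly_dtb, yonly_K0. Qed.

Lemma pd_zero a z : pd (fun _ : vec => 0) a z = 0.
Proof. apply pd_constf; reflexivity. Qed.

Lemma dtbK c j x y : dtb (K0 (cubic c)) j x y = (0, pd (fun w => - ln (cubic c w)) j y / 2).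
Proof.
  rewrite dtb_y by apply yonly_K0. unfold K0, RtoC; cbn [fst snd].
  rewrite pd_zero. f_equal; field.
Qed.

Lemma gm_all c i j x y :
  gmet (cubic c) i j x y = (pd (fun y' => pd (fun w => - ln (cubic c w)) j y' / 2) i y / 2, 0).
Proof.
  unfold gmet. rewrite dt_y by (apply yonly_dtb, yonly_K0).
  assert (E1 : (fun y' => snd (dtb (K0 (cubic c)) j x y')) = (fun y' => pd (fun w => - ln (cubic c w)) j y' / 2))
    by (apply functional_extensionality; intro; rewrite dtbK; reflexivity).
  assert (E2 : (fun y' => fst (dtb (K0 (cubic c)) j x y')) = (fun _ => 0))
    by (apply functional_extensionality; intro; rewrite dtbK; reflexivity).
  rewrite E1, E2, pd_zero. f_equal; field.
Qed.

Lemma hasd_ell c j : (j < 3)%nat -> hasd c (fun w => - ln (cubic c w)) j (fun w => - Pf c j w).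
Proof.
  intro Hj. eapply hasd_ext; [| apply hasd_opp, hasd_ln; [intros; assumption | apply hasd_cubic; exact Hj]].
  intros z Hz; cbv beta; unfold Pf; field; lra.
Qed.

Lemma gm_U c i j x y : (i < 3)%nat -> (j < 3)%nat -> 0 < cubic c y ->
  gmet (cubic c) i j x y = (- Mf c j i y / 4, 0).
Proof.
  intros Hi Hj Hy. rewrite gm_all.
  rewrite (pd_local c (fun y' => pd (fun w => - ln (cubic c w)) j y' / 2) (fun w => - Pf c j w * / 2) i
     (fun z => - Mf c j i z * / 2 + - Pf c j z * 0) y Hi).
  - f_equal; field.
  - intros w Hw. unfold Rdiv; f_equal. apply (pd_local c _ _ j _ w Hj (fun _ _ => eq_refl) (hasd_ell c j Hj) Hw).
  - apply (hasd_mult c (fun w => - Pf c j w) (fun _ => / 2)); [apply hasd_opp, hasd_P; exact Hi | apply hasd_const].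
  - exact Hy.
Qed.

Lemma gm_snd c i j x y : snd (gmet (cubic c) i j x y) = 0.
Proof. rewrite gm_all; reflexivity. Qed.

Lemma dt_gm c i e k x y : (i < 3)%nat -> (e < 3)%nat -> (k < 3)%nat -> 0 < cubic c y ->
  dt (gmet (cubic c) i e) k x y = (0, L3f c e i k y / 8).
Proof.
  intros Hi He Hk Hy. rewrite dt_y by apply yonly_gmet.
  assert (E1 : (fun y' => snd (gmet (cubic c) i e x y')) = (fun _ => 0))
    by (apply functional_extensionality; intro; apply gm_snd).
  rewrite E1, pd_zero.
  rewrite (pd_local c _ (fun w => - Mf c e i w * / 4) k (fun z => - L3f c e i k z * / 4 + - Mf c e i z * 0) y Hk).
  - f_equal; field.
  - intros w Hw. rewrite gm_U by assumption. simpl; field.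
  - apply (hasd_mult c (fun w => - Mf c e i w) (fun _ => / 4)); [apply hasd_opp, hasd_M; exact Hk | apply hasd_const].
  - exact Hy.
Qed.

Lemma dtb_gm c i e k x y : (i < 3)%nat -> (e < 3)%nat -> (k < 3)%nat -> 0 < cubic c y ->
  dtb (gmet (cubic c) i e) k x y = (0, - L3f c e i k y / 8).
Proof.
  intros Hi He Hk Hy. rewrite dtb_y by apply yonly_gmet.
  assert (E1 : (fun y' => snd (gmet (cubic c) i e x y')) = (fun _ => 0))
    by (apply functional_extensionality; intro; apply gm_snd).
  rewrite E1, pd_zero.
  rewrite (pd_local c _ (fun w => - Mf c e i w * / 4) k (fun z => - L3f c e i k z * / 4 + - Mf c e i z * 0) y Hk).
  - f_equal; field.
  - intros w Hw. rewrite gm_U by assumption. simpl; field.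
  - apply (hasd_mult c (fun w => - Mf c e i w) (fun _ => / 4)); [apply hasd_opp, hasd_M; exact Hk | apply hasd_const].
  - exact Hy.
Qed.

Lemma dtb_gm_fst c i j l x y : fst (dtb (gmet (cubic c) i j) l x y) = 0.
Proof.
  rewrite dtb_y by apply yonly_gmet.
  assert (E1 : (fun y' => snd (gmet (cubic c) i j x y')) = (fun _ => 0))
    by (apply functional_extensionality; intro; apply gm_snd).
  rewrite E1, pd_zero. simpl; field.
Qed.

Lemma dtdtb_gm c i j k l x y : (i < 3)%nat -> (j < 3)%nat -> (k < 3)%nat -> (l < 3)%nat -> 0 < cubic c y ->
  dt (dtb (gmet (cubic c) i j) l) k x y = (- L4f c j i l k y / 16, 0).
Proof.
  intros Hi Hj Hk Hl Hy. rewrite dt_y by (apply yonly_dtb, yonly_gmet).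
  assert (E1 : (fun y' => fst (dtb (gmet (cubic c) i j) l x y')) = (fun _ => 0))
    by (apply functional_extensionality; intro; apply dtb_gm_fst).
  rewrite E1, pd_zero.
  rewrite (pd_local c _ (fun w => - L3f c j i l w * / 8) k (fun z => - L4f c j i l k z * / 8 + - L3f c j i l z * 0) y Hk).
  - f_equal; field.
  - intros w Hw. rewrite dtb_gm by assumption. simpl; field.
  - apply (hasd_mult c (fun w => - L3f c j i l w) (fun _ => / 8)); [apply hasd_opp, hasd_L3; exact Hk | apply hasd_const].
  - exact Hy.
Qed.

Lemma f3_val c i k p y : (i < 3)%nat -> (k < 3)%nat -> (p < 3)%nat -> 0 < cubic c y ->
  f3 (cubic c) i k p y = S3 c p k i.
Proof.
  intros Hi Hk Hp Hy. unfold f3.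
  apply (pd_local c _ (F2 c p k) i (fun _ => S3 c p k i) y Hi); [| apply hasd_F2; exact Hi | exact Hy].
  intros w Hw. apply (pd_local c _ (F1 c p) k (F2 c p k) w Hk); [| apply hasd_F1; exact Hk | exact Hw].
  intros v Hv. apply (pd_local c _ (cubic c) p (F1 c p) v Hp); [ reflexivity | apply hasd_cubic; exact Hp | exact Hv].
Qed.


Definition dr (i d : nat) : R := if Nat.eqb i d then 1 else 0.

Lemma sum3_ext f g : (forall e, (e < 3)%nat -> f e = g e) -> sum3 f = sum3 g.
Proof. intro H; unfold sum3; rewrite !H by lia; reflexivity. Qed.

Lemma sum3_dl i X : (i < 3)%nat -> sum3 (fun d => dr i d * X d) = X i.
Proof. intro Hi; destruct i as [|[|[|]]]; try lia; unfold sum3, dr; simpl; ring. Qed.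
Lemma sum3_dr i X : (i < 3)%nat -> sum3 (fun d => dr d i * X d) = X i.
Proof. intro Hi; destruct i as [|[|[|]]]; try lia; unfold sum3, dr; simpl; ring. Qed.

Lemma final_ring (P : nat -> R) (M : nat -> nat -> R) (Rr : nat -> nat -> nat -> R) X :
  (forall a b, M a b = M b a) ->
  (forall a b d, Rr a b d = Rr b a d) -> (forall a b d, Rr a b d = Rr a d b) ->
  forall i j k l, (i < 3)%nat -> (j < 3)%nat -> (k < 3)%nat -> (l < 3)%nat ->
  - L4x P M Rr j i l k / 16 -
    / 64 * (X + 4 * P l * Rr j i k + 4 * P j * Rr l i k - 4 * M j l * (M i k + P i * P k)
            - 4 * P j * P l * (M i k + P i * P k) + 4 * P k * L3x P M Rr j i l
            + 4 * P i * L3x P M Rr j k l - 4 * (M i k + P i * P k) * (-2 * M j l))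
  = M j i / 4 * (M l k / 4) + M l i / 4 * (M j k / 4) - X / 64.
Proof.
  intros Ms R12 R23 i j k l Hi Hj Hk Hl.
  unfold L4x, L3x.
  destruct i as [|[|[|]]]; try lia; destruct j as [|[|[|]]]; try lia;
  destruct k as [|[|[|]]]; try lia; destruct l as [|[|[|]]]; try lia;
  repeat match goal with
  | |- context [M ?a ?b] => lazymatch eval compute in (Nat.ltb b a) with true => rewrite (Ms a b) end
  | |- context [Rr ?a ?b ?d] => lazymatch eval compute in (Nat.ltb b a) with true => rewrite (R12 a b d) end
  | |- context [Rr ?a ?b ?d] => lazymatch eval compute in (Nat.ltb d b) with true => rewrite (R23 a b d) end
  end; field.
Qed.

Lemma alg (P : nat -> R) (M : nat -> nat -> R) (Rr : nat -> nat -> nat -> R) (A : nat -> nat -> R) (y : vec) :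
  (forall a b, M a b = M b a) ->
  (forall a b d, Rr a b d = Rr b a d) -> (forall a b d, Rr a b d = Rr a d b) ->
  (forall e, sum3 (fun m => M e m * y m) = - P e) ->
  sum3 (fun a => y a * P a) = 3 ->
  (forall a b, sum3 (fun d => y d * Rr a b d) = M a b + P a * P b) ->
  (forall i d, (i < 3)%nat -> (d < 3)%nat -> sum3 (fun e => M e i * A e d) = -4 * dr i d) ->
  (forall e d, (e < 3)%nat -> (d < 3)%nat -> A e d = A d e) ->
  forall i j k l, (i < 3)%nat -> (j < 3)%nat -> (k < 3)%nat -> (l < 3)%nat ->
  - L4x P M Rr j i l k / 16
  - sum3 (fun d => sum3 (fun e => A e d * (L3x P M Rr e i k * L3x P M Rr j d l / 64)))
  = M j i / 4 * (M l k / 4) + M l i / 4 * (M j k / 4)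
  - sum3 (fun p => sum3 (fun q => A q p * (Rr p k i * Rr q l j / 64))).
Proof.
  intros Ms R12 R23 E1 E2 E3 HA As i j k l Hi Hj Hk Hl.
  assert (AP : forall d, (d < 3)%nat -> sum3 (fun e => A e d * P e) = 4 * y d).
  { intros d Hd.
    transitivity (sum3 (fun e => A e d * - sum3 (fun m => M e m * y m))).
    { apply sum3_ext; intros e He; rewrite E1; ring. }
    transitivity (- sum3 (fun m => y m * sum3 (fun e => M e m * A e d))).
    { unfold sum3; ring. }
    transitivity (- sum3 (fun m => y m * (-4 * dr m d))).
    { f_equal; apply sum3_ext; intros m Hm; rewrite HA by assumption; ring. }
    destruct d as [|[|[|]]]; try lia; unfold sum3, dr; simpl; ring. }
  assert (yL3 : forall j l, sum3 (fun d => y d * L3x P M Rr j d l) = -2 * M j l).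
  { intros j0 l0.
    transitivity (sum3 (fun d => y d * Rr j0 l0 d) - P l0 * sum3 (fun d => M j0 d * y d)
      - M j0 l0 * sum3 (fun d => y d * P d) - P j0 * sum3 (fun d => M l0 d * y d)
      - P j0 * P l0 * sum3 (fun d => y d * P d)).
    { unfold L3x, sum3. rewrite (R23 j0 0%nat l0), (R23 j0 1%nat l0), (R23 j0 2%nat l0),
        (Ms 0%nat l0), (Ms 1%nat l0), (Ms 2%nat l0). ring. }
    rewrite E3, !E1, E2; ring. }
  assert (AL3 : forall i k d, (i < 3)%nat -> (k < 3)%nat -> (d < 3)%nat ->
     sum3 (fun e => A e d * L3x P M Rr e i k) = sum3 (fun e => A e d * Rr e i k)
       + 4 * dr i d * P k + 4 * dr k d * P i - 4 * y d * M i k - 4 * y d * P i * P k).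
  { intros i0 k0 d Hi0 Hk0 Hd.
    transitivity (sum3 (fun e => A e d * Rr e i0 k0) - P k0 * sum3 (fun e => M e i0 * A e d)
      - P i0 * sum3 (fun e => M e k0 * A e d) - M i0 k0 * sum3 (fun e => A e d * P e)
      - P i0 * P k0 * sum3 (fun e => A e d * P e)).
    { unfold L3x, sum3; ring. }
    rewrite (HA i0 d), (HA k0 d), AP by assumption; ring. }
  assert (L3s : forall a b d, L3x P M Rr a b d = L3x P M Rr b a d).
  { intros a b d; unfold L3x; rewrite (R12 a b d), (Ms a b); ring. }
  assert (yR : forall a b, sum3 (fun e => y e * Rr e a b) = M a b + P a * P b).
  { intros a b; rewrite <- E3; apply sum3_ext; intros e _.
    rewrite (R12 e a b), (R23 a e b); reflexivity. }
  set (X := sum3 (fun e => sum3 (fun d => Rr e i k * A d e * Rr d j l))).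
  assert (RX : sum3 (fun p => sum3 (fun q => A q p * (Rr p k i * Rr q l j / 64))) = X / 64).
  { unfold X. transitivity (/ 64 * sum3 (fun e => sum3 (fun d => Rr e i k * A d e * Rr d j l))).
    2: field.
    transitivity (/ 64 * sum3 (fun p => sum3 (fun q => A q p * Rr p k i * Rr q l j))).
    { unfold sum3; field. }
    f_equal; apply sum3_ext; intros e _; apply sum3_ext; intros d _.
    rewrite (R23 e k i), (R23 d l j); ring. }
  rewrite RX.
  assert (T1 : sum3 (fun d => sum3 (fun e => A e d * (L3x P M Rr e i k * L3x P M Rr j d l / 64)))
     = / 64 * sum3 (fun d => sum3 (fun e => A e d * L3x P M Rr e i k) * L3x P M Rr j d l)).
  { unfold sum3; field. }
  rewrite T1.
  rewrite (sum3_ext _ (fun d => (sum3 (fun e => A e d * Rr e i k)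
       + 4 * dr i d * P k + 4 * dr k d * P i - 4 * y d * M i k - 4 * y d * P i * P k) * L3x P M Rr j d l))
    by (intros d Hd; rewrite AL3 by assumption; reflexivity).
  assert (T2 : forall d, (d < 3)%nat ->
     sum3 (fun e => A e d * Rr e i k) = sum3 (fun e => Rr e i k * A e d)).
  { intros; apply sum3_ext; intros; ring. }
  transitivity (- L4x P M Rr j i l k / 16 - / 64 * (
      sum3 (fun e => Rr e i k * sum3 (fun d => A e d * L3x P M Rr j d l))
      + 4 * P k * sum3 (fun d => dr i d * L3x P M Rr j d l)
      + 4 * P i * sum3 (fun d => dr k d * L3x P M Rr j d l)
      - 4 * (M i k + P i * P k) * sum3 (fun d => y d * L3x P M Rr j d l))).
  { f_equal. f_equal. unfold sum3; ring. }
  rewrite sum3_dl, sum3_dl, yL3 by assumption.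
  rewrite (sum3_ext (fun e => Rr e i k * sum3 (fun d => A e d * L3x P M Rr j d l))
     (fun e => Rr e i k * (sum3 (fun d => A d e * Rr d j l) + 4 * dr j e * P l + 4 * dr l e * P j
         - 4 * y e * M j l - 4 * y e * P j * P l))).
  2: { intros e He. f_equal. rewrite <- AL3 by assumption. apply sum3_ext; intros d Hd.
       rewrite As, L3s by assumption; reflexivity. }
  transitivity (- L4x P M Rr j i l k / 16 - / 64 * (
      (X + 4 * P l * sum3 (fun e => dr j e * Rr e i k) + 4 * P j * sum3 (fun e => dr l e * Rr e i k)
       - 4 * M j l * sum3 (fun e => y e * Rr e i k) - 4 * P j * P l * sum3 (fun e => y e * Rr e i k))
      + 4 * P k * L3x P M Rr j i l + 4 * P i * L3x P M Rr j k l
      - 4 * (M i k + P i * P k) * (-2 * M j l))).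
  { f_equal. f_equal. unfold X, sum3; ring. }
  rewrite sum3_dl, sum3_dl, yR by assumption.
  apply final_ring; assumption.
Qed.


Theorem lemma2p9 (c : nat -> nat -> nat -> R) (x y : vec) (Hinv : nat -> nat -> Cx) :
  in_index_cone (cubic c) y ->
  (* Hinv is the inverse matrix of (g_{i jbar}(x,y)) : Hinv e d = g^{ebar d} *)
  (forall i d, (i < 3)%nat -> (d < 3)%nat ->
     Csum3 (fun e => Cmul (gmet (cubic c) i e x y) (Hinv e d)) = Cdelta i d) ->
  (forall e j, (e < 3)%nat -> (j < 3)%nat ->
     Csum3 (fun d => Cmul (Hinv e d) (gmet (cubic c) d j x y)) = Cdelta e j) ->
  forall i j k l, (i < 3)%nat -> (j < 3)%nat -> (k < 3)%nat -> (l < 3)%nat ->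
    curv (cubic c) Hinv i j k l x y =
    Csub (Cadd (Cmul (gmet (cubic c) i j x y) (gmet (cubic c) k l x y))
               (Cmul (gmet (cubic c) i l x y) (gmet (cubic c) k j x y)))
         (Csum3 (fun p => Csum3 (fun q =>
            Cmul (Hinv q p)
              (RtoC (f3 (cubic c) i k p y * f3 (cubic c) j l q y
                     / (64 * (cubic c y) ^ 2)))))).
Proof.
  intros Hcone H1 H2 i j k l Hi Hj Hk Hl.
  destruct Hcone as [Hy0 _]. assert (Hy : 0 < cubic c y) by lra. clear Hy0.
  set (A := fun e d => fst (Hinv e d)). set (B := fun e d => snd (Hinv e d)).
  assert (HA : forall i d, (i < 3)%nat -> (d < 3)%nat ->
     sum3 (fun e => Mf c e i y * A e d) = -4 * dr i d /\ sum3 (fun e => Mf c e i y * B e d) = 0).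
  { intros i0 d Hi0 Hd. specialize (H1 i0 d Hi0 Hd). unfold Csum3 in H1.
    rewrite !(gm_U c i0) in H1 by (assumption || lia).
    unfold Cdelta, Cadd, Cmul in H1. unfold dr, A, B, sum3.
    destruct (Nat.eqb i0 d); injection H1; intros; split; simpl in *; lra. }
  assert (HA2 : forall e j, (e < 3)%nat -> (j < 3)%nat ->
     sum3 (fun d => A e d * Mf c j d y) = -4 * dr e j /\ sum3 (fun d => B e d * Mf c j d y) = 0).
  { intros e j0 He Hj0. specialize (H2 e j0 He Hj0). unfold Csum3 in H2.
    rewrite !(fun d => gm_U c d j0) in H2 by (assumption || lia).
    unfold Cdelta, Cadd, Cmul in H2. unfold dr, A, B, sum3.
    destruct (Nat.eqb e j0); injection H2; intros; split; simpl in *; lra. }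
  assert (Ms : forall a b, Mf c a b y = Mf c b a y).
  { intros; unfold Mf, Qf, F2, S3, sum3; ring. }
  assert (R12 : forall a b d, Rf c a b d y = Rf c b a d y).
  { intros; unfold Rf, S3; ring. }
  assert (R23 : forall a b d, Rf c a b d y = Rf c a d b y).
  { intros; unfold Rf, S3; ring. }
  assert (Bz : forall e d, (e < 3)%nat -> (d < 3)%nat -> B e d = 0).
  { intros e d He Hd.
    transitivity (sum3 (fun m => dr m d * B e m)); [symmetry; apply (sum3_dr d (B e)); exact Hd|].
    transitivity (sum3 (fun m => B e m * (-/4 * sum3 (fun n => Mf c n m y * A n d)))).
    { apply sum3_ext; intros m Hm. rewrite (proj1 (HA m d Hm Hd)). field. }
    transitivity (-/4 * sum3 (fun n => sum3 (fun m => B e m * Mf c n m y) * A n d)).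
    { unfold sum3; ring. }
    rewrite (sum3_ext _ (fun n => 0 * A n d)).
    - unfold sum3; ring.
    - intros n Hn. rewrite (proj2 (HA2 e n He Hn)); ring. }
  assert (As : forall e d, (e < 3)%nat -> (d < 3)%nat -> A e d = A d e).
  { intros e d He Hd.
    assert (K : -4 * A e d = -4 * A d e); [|lra].
    transitivity (sum3 (fun m => (-4 * dr m e) * A m d)).
    { rewrite <- (sum3_dr e (fun m => -4 * A m d)) by exact He. apply sum3_ext; intros; ring. }
    transitivity (sum3 (fun m => sum3 (fun n => Mf c n m y * A n e) * A m d)).
    { apply sum3_ext; intros m Hm. rewrite (proj1 (HA m e Hm He)); ring. }
    transitivity (sum3 (fun n => A n e * sum3 (fun m => Mf c m n y * A m d))).
    { unfold sum3; rewrite (Ms 1%nat 0%nat), (Ms 2%nat 0%nat), (Ms 2%nat 1%nat); ring. }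
    transitivity (sum3 (fun n => (-4 * dr n d) * A n e)).
    { apply sum3_ext; intros n Hn. rewrite (proj1 (HA n d Hn Hd)); ring. }
    rewrite <- (sum3_dr d (fun m => -4 * A m e)) by exact Hd. apply sum3_ext; intros; ring. }
  assert (HF : forall e d, (e < 3)%nat -> (d < 3)%nat -> Hinv e d = (A e d, 0)).
  { intros e d He Hd. specialize (Bz e d He Hd). unfold A; unfold B in Bz.
    destruct (Hinv e d); simpl in *; subst; reflexivity. }
  assert (SR : forall p q, S3 c p k i * S3 c q l j / (64 * cubic c y ^ 2)
     = Rf c p k i y * Rf c q l j y / 64).
  { intros; unfold Rf; field; lra. }
  pose proof (alg (fun a => Pf c a y) (fun a b => Mf c a b y) (fun a b d => Rf c a b d y) A y
    Ms R12 R23) as K.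
  assert (K1 : forall e, sum3 (fun m => F2 c e m y * y m) = 2 * F1 c e y).
  { intros; unfold F2, F1, sum3; field. }
  assert (K2 : sum3 (fun m => F1 c m y * y m) = 3 * cubic c y).
  { unfold F1, S3, cubic, sum3; field. }
  assert (E1 : forall e, sum3 (fun m => Mf c e m y * y m) = - Pf c e y).
  { intro e. transitivity (/ cubic c y * sum3 (fun m => F2 c e m y * y m)
       - F1 c e y * / cubic c y * / cubic c y * sum3 (fun m => F1 c m y * y m)).
    { unfold Mf, Qf, Pf, sum3; ring. }
    rewrite K1, K2; unfold Pf; field; lra. }
  assert (E2 : sum3 (fun a => y a * Pf c a y) = 3).
  { transitivity (/ cubic c y * sum3 (fun m => F1 c m y * y m)).
    { unfold Pf, sum3; ring. }
    rewrite K2; field; lra. }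
  assert (E3 : forall a b, sum3 (fun d => y d * Rf c a b d y) = Mf c a b y + Pf c a y * Pf c b y).
  { intros; unfold Rf, Mf, Qf, F2, sum3; ring. }
  specialize (K E1 E2 E3 (fun i d Hi Hd => proj1 (HA i d Hi Hd)) As i j k l Hi Hj Hk Hl).
  clearbody A B.
  unfold curv. rewrite (dtdtb_gm c i j k l x y) by assumption.
  unfold Csum3.
  rewrite !(dt_gm c) by (assumption || lia).
  rewrite !(dtb_gm c) by (assumption || lia).
  rewrite !(gm_U c) by (assumption || lia).
  rewrite !(f3_val c) by (assumption || lia).
  rewrite !HF by lia.
  rewrite !SR.
  unfold Csub, Cadd, Cmul, RtoC; cbn [fst snd].
  unfold sum3 in K; cbv beta in K. unfold L3f, L4f.
  f_equal; [lra | ring].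
Qed.
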